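(* If a set of desirable option sets $K\subseteq\mathscr{Q}$ is coherent, then the choice function $C_K$ is coherent.
   Context: Let $\mathcal{X}$ be a nonempty set and let $\mathscr{V}$ be the real vector space of all functions $u:\mathcal{X}\to\mathbb{R}$ (options), with pointwise operations. For $u,v\in\mathscr{V}$, $u\le v$ iff $u(x)\le v(x)$ for all $x\in\mathcal{X}$, and $u<v$ iff $u\le v$ and $u\neq v$. Let $\mathscr{V}_{>0}=\{u\in\mathscr{V}:0<u\}$ and $\mathscr{V}^s_{>0}=\{\{u\}:u\in\mathscr{V}_{>0}\}$. Let $\mathscr{Q}$ be the set of all finite subsets of $\mathscr{V}$ (including $\emptyset$). For $A\in\mathscr{Q}$ and $u\in\mathscr{V}$, $A-u=\{v-u:v\in A\}$. For a positive integer $n$, $\mathbb{R}^{n,+}=\{\boldsymbol\lambda\in\mathbb{R}^n:\lambda_j\ge0\ \forall j,\ \sum_j\lambda_j>0\}$, and for $\boldsymbol\lambda\in\mathbb{R}^n$, $\mathbf u=(u_1,\dots,u_n)\in\mathscr{V}^n$, $\boldsymbol\lambda\mathbf u=\sum_{j=1}^n\lambda_ju_j$. A choice function is a map $C:\mathscr{Q}\to\mathscr{Q}$ with $C(A)\subseteq A$ for all $A$; its rejection function is $R_C(A)=A\setminus C(A)$, and $K_C=\{A\in\mathscr{Q}:0\notin C(A\cup\{0\})\}$. $C$ is coherent if: (C0) $C(A)\neq\emptyset$ for all nonempty $A\in\mathscr{Q}$; (C1) for all $A\in\mathscr{Q}$ and $u\in A$: $u\in C(A)\iff 0\in C(A-u)$;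 (C2) $\{u\}\in K_C$ for all $u\in\mathscr{V}_{>0}$; (C3) for all $A,B\in K_C$ and all maps $\boldsymbol\lambda:A\times B\to\mathbb{R}^{2,+}$, $\{\boldsymbol\lambda(\mathbf u)\mathbf u:\mathbf u\in A\times B\}\in K_C$; (C4) $A\subseteq B\Rightarrow R_C(A)\subseteq R_C(B)$ for all $A,B\in\mathscr{Q}$. A set of desirable option sets is any $K\subseteq\mathscr{Q}$. It is coherent if for all $A,B\in K$: (K0) $A\setminus\{0\}\in K$; (K1) $\{0\}\notin K$; (K2) $\mathscr{V}^s_{>0}\subseteq K$; (K3) $\{\boldsymbol\lambda(\mathbf u)\mathbf u:\mathbf u\in A\times B\}\in K$ for every map $\boldsymbol\lambda:A\times B\to\mathbb{R}^{2,+}$; (K4) $A\cup Q\in K$ for all $Q\in\mathscr{Q}$. For $K\subseteq\mathscr{Q}$, the choice function $C_K$ is defined by $C_K(A)=\{u\in A:(A-u)\setminus\{0\}\notin K\}$ for all $A\in\mathscr{Q}$. *)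

(* Defs.v *)
From HB Require Import structures.
From mathcomp Require Import all_boot all_order all_algebra.
From mathcomp Require Import all_classical all_reals.
Set Implicit Arguments. Unset Strict Implicit. Unset Printing Implicit Defensive.
Import Order.TTheory GRing.Theory Num.Theory.
Local Open Scope ring_scope.
Local Open Scope classical_set_scope.

Section Defs.
Variables (X : Type) (R : realType).

Definition opt := X -> R.
Definition opt0 : opt := fun _ => 0.
Definition opt_sub (v u : opt) : opt := fun x => v x - u x.
Definition opt_le (u v : opt) : Prop := forall x, u x <= v x.
Definition opt_lt (u v : opt) : Prop := opt_le u v /\ u <> v.
Definition opt_pos (u : opt) : Prop := opt_lt opt0 u.

Definition isQ (A : set opt) : Prop := finite_set A.

Definition shift (A : set opt) (u : opt) : set opt := [set opt_sub v u | v in A].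

Definition R2plus (l : R * R) : Prop := 0 <= l.1 /\ 0 <= l.2 /\ 0 < l.1 + l.2.

Definition posi (A B : set opt) (lam : opt * opt -> R * R) : set opt :=
  [set (fun x => (lam (u, v)).1 * u x + (lam (u, v)).2 * v x) | u in A & v in B].

Definition is_choice_function (C : set opt -> set opt) : Prop :=
  forall A, isQ A -> C A `<=` A.
Definition rejection (C : set opt -> set opt) (A : set opt) : set opt := A `\` C A.
Definition K_of (C : set opt -> set opt) : set (set opt) :=
  [set A | isQ A /\ ~ C (A `|` [set opt0]) opt0].

Definition coherent_choice (C : set opt -> set opt) : Prop :=
  [/\ forall A, isQ A -> A !=set0 -> C A !=set0,
      forall A u, isQ A -> A u -> (C A u <-> C (shift A u) opt0),
      (forall u, opt_pos u -> K_of C [set u]),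
      forall A B, K_of C A -> K_of C B ->
                 forall lam : opt * opt -> R * R,
                   (forall u v, A u -> B v -> R2plus (lam (u, v))) ->
                   K_of C (posi A B lam)
    & forall A B, isQ A -> isQ B -> A `<=` B ->
                 rejection C A `<=` rejection C B].

Definition coherent_SDOS (K : set (set opt)) : Prop :=
  (forall A, K A -> isQ A) /\
  [/\ forall A, K A -> K (A `\ opt0),
      (~ K [set opt0]),
      (forall u, opt_pos u -> K [set u]),
      forall A B, K A -> K B ->
                 forall lam : opt * opt -> R * R,
                   (forall u v, A u -> B v -> R2plus (lam (u, v))) ->
                   K (posi A B lam)
    & forall A Q, K A -> isQ Q -> K (A `|` Q)].

Definition C_of (K : set (set opt)) (A : set opt) : set opt :=
  [set u | A u /\ ~ K (shift A u `\ opt0)].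

End Defs.

(* Main.v *)
Require Import Defs.
From mathcomp Require Import all_boot all_order all_algebra.
From mathcomp Require Import all_classical all_reals.
From mathcomp Require Import finmap lra.
Import Order.TTheory GRing.Theory Num.Theory.
Local Open Scope ring_scope.
Local Open Scope classical_set_scope.

Lemma shift0 (X : Type) (R : realType) (A : set (opt X R)) :
  shift A (opt0 R) = A.
Proof.
apply/seteqP; split => [x [v Av <-]|x Ax].
  suff -> : opt_sub v (opt0 R) = v by [].
  by apply: funext => t; rewrite /opt_sub /opt0 subr0.
exists x => //.
by apply: funext => t; rewrite /opt_sub /opt0 subr0.
Qed.

Lemma subvv (X : Type) (R : realType) (u : opt X R) : opt_sub u u = opt0 R.
Proof. by apply: funext => t; rewrite /opt_sub /opt0 subrr. Qed.

Lemma isQ_shift (X : Type) (R : realType) (A : set (opt X R)) u :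
  isQ A -> isQ (shift A u).
Proof. exact: finite_image. Qed.

Lemma emptyK (X : Type) (R : realType) (K : set (set (opt X R))) :
  coherent_SDOS K -> ~ K set0.
Proof.
move=> [_ [_ K1 _ _ K4]] K0.
apply: K1; have := K4 _ [set opt0 R] K0 (finite_set1 _).
by rewrite set0U.
Qed.

Lemma step (X : Type) (R : realType) (K : set (set (opt X R))) :
  coherent_SDOS K -> forall (A' : set (opt X R)) a u, isQ A' -> A' u ->
  ~ K (shift A' u `\ opt0 R) ->
  exists w, (A' `|` [set a]) w /\ ~ K (shift (A' `|` [set a]) w `\ opt0 R).
Proof.
move=> cK A' a u fA Au nK.
have [aA|naA] := pselect (A' a).
  have -> : A' `|` [set a] = A' by apply/seteqP; split => [x [//|->//]|x Ax]; left.
  by exists u.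
apply: contrapT => Hn.
have H w : (A' `|` [set a]) w -> K (shift (A' `|` [set a]) w `\ opt0 R).
  by move=> Aw; apply: contrapT => nKw; apply: Hn; exists w.
have Ku := H u (or_introl Au).
have Ka := H a (or_intror erefl).
case: cK => Qs [K0 K1 K2 K3 K4].
pose lam (p : opt X R * opt X R) : R * R :=
  if pselect (p.1 = opt_sub a u) then (1, 1) else (1, 0).
have lamP : forall x y, (shift (A' `|` [set a]) u `\ opt0 R) x ->
    (shift (A' `|` [set a]) a `\ opt0 R) y -> R2plus (lam (x, y)).
  move=> x y _ _; rewrite /lam /R2plus /=; case: pselect => _ /=.
    by split; [exact: ler01|split; [exact: ler01|apply: addr_gt0; exact: ltr01]].
  by split; [exact: ler01|split; [exact: lexx|rewrite addr0; exact: ltr01]].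
have KP := K3 _ _ Ku Ka lam lamP.
have sub : posi (shift (A' `|` [set a]) u `\ opt0 R)
               (shift (A' `|` [set a]) a `\ opt0 R) lam `<=` shift A' u.
  move=> z [x [[w Aw <-] xn0] [y [[v Av <-] yn0] <-]].
  have va : v <> a by move=> e; apply: yn0; rewrite e subvv.
  have Av' : A' v by case: Av => // e.
  rewrite /lam /=; case: pselect => [e|ne] /=.
    exists v => //; apply: funext => t; rewrite /opt_sub mul1r mul1r.
    have := congr1 (fun f => f t) e; rewrite /opt_sub => ->; lra.
  have Aw' : A' w by case: Aw => // e; exfalso; apply: ne; rewrite /= e.
  exists w => //; apply: funext => t; rewrite mul1r mul0r addr0 //.
have := K4 _ _ KP (@isQ_shift _ _ A' u fA).
have -> : posi (shift (A' `|` [set a]) u `\ opt0 R)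
               (shift (A' `|` [set a]) a `\ opt0 R) lam `|` shift A' u = shift A' u.
  by apply/setUidr.
by move=> /K0.
Qed.

Lemma C0lem (X : Type) (R : realType) (K : set (set (opt X R))) :
  coherent_SDOS K -> forall A : set (opt X R), isQ A -> A !=set0 ->
  exists u, A u /\ ~ K (shift A u `\ opt0 R).
Proof.
move=> cK A fA.
have [S ->] := (@finite_fsetP {classic (opt X R)} A).1 fA.
elim/fset1U_rect: S => [|x S _ IH].
  by rewrite set_fset0 => -[].
rewrite set_fsetU1 => _.
have [S0|/set0P/IH [u [Su nKu]]] := eqVneq [set` S] set0.
  rewrite S0 setU0; exists x; split => //.
  have -> : shift [set x] x `\ opt0 R = set0.
    apply/seteqP; split => [z [[v /= -> <-]]|z //].
    by rewrite subvv.
  exact: emptyK.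
have [w [Hw nKw]] := @step _ _ K cK _ x u (finite_fset S) Su nKu.
exists w.
by rewrite setUC.
Qed.

Lemma U0D (X : Type) (R : realType) (A : set (opt X R)) :
  (A `|` [set opt0 R]) `\ opt0 R = A `\ opt0 R.
Proof.
apply/seteqP; split => [z [[Az|->] nz]|z [Az nz]]; first by split.
  by case: nz.
by split => //; left.
Qed.

Lemma KofE (X : Type) (R : realType) (K : set (set (opt X R))) A :
  K_of (C_of K) A <-> isQ A /\ K (A `\ opt0 R).
Proof.
rewrite /K_of /C_of /= shift0 U0D; split => -[fA H]; split => //.
  by apply: contrapT => nK; apply: H; split => //; right.
by move=> [_ nK].
Qed.

Theorem proposition1 (X : Type) (x0 : X) (R : realType)
  (K : set (set (opt X R))) :
  coherent_SDOS K ->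
  is_choice_function (C_of K) /\ coherent_choice (C_of K).
Proof.
move=> cK; have cK' := cK; case: cK' => Qs [K0 K1 K2 K3 K4].
split; first by move=> A _ u [].
split.
- move=> A fA nA; have [u [Au nK]] := @C0lem _ _ K cK A fA nA.
  by exists u.
- move=> A u fA Au; rewrite /C_of /= shift0; split => [[_ nK]|[_ nK]]; split => //.
  by exists u => //; rewrite subvv.
- move=> u pu; apply/KofE; split; first exact: finite_set1.
  have -> : [set u] `\ opt0 R = [set u].
    apply/seteqP; split => [z []//|z /= ->]; split => //= e.
    by case: pu => _ ; rewrite e.
  exact: K2.
- move=> A B /KofE [fA KA] /KofE [fB KB] lam lamP; apply/KofE.
  have fP : isQ (posi A B lam) by apply: finite_image2.
  split => //.
  have KP : K (posi (A `\ opt0 R) (B `\ opt0 R) lam).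
    by apply: K3 => // x y [Ax _] [By _]; apply: lamP.
  apply: K0; have := K4 _ _ KP fP.
  suff -> : posi (A `\ opt0 R) (B `\ opt0 R) lam `|` posi A B lam = posi A B lam by [].
  apply/setUidr => z [x [Ax _] [y [By _] <-]]; by exists x => //; exists y.
- move=> A B fA fB AB u [Au nCA]; split; first exact: AB.
  move=> [_ nKB]; apply: nKB.
  have KA : K (shift A u `\ opt0 R) by apply: contrapT => nK; apply: nCA.
  have E : (shift A u `\ opt0 R) `|` (shift B u `\ opt0 R) = shift B u `\ opt0 R.
    apply/setUidr => z [[v Av <-] nz]; split => //; exists v => //; exact: AB.
  rewrite -E; apply: (K4 _ _ KA).
  exact: (finite_setD _ (@isQ_shift _ _ B u fB)).
Qed.
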